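(* For every integer $n\ge1$ and real $x$, $$\frac{\mathfrak{C}_n(x)}{n!}=\det\begin{pmatrix} R(1)&1&&&\\ R(2)&R(1)&1&&\\ \vdots&\vdots&\ddots&\ddots&\\ R(n-1)&R(n-2)&\cdots&R(1)&1\\ R(n)&R(n-1)&\cdots&R(2)&R(1) \end{pmatrix},$$ the $n\times n$ lower Hessenberg matrix with entries $R(i-j+1)$ for $i\ge j$, $1$ on the superdiagonal and $0$ elsewhere, where $$R(j)=x\,\frac{(-1)^{j-1}}{j!}\left(\left(\tfrac12\right)^j-\left(-\tfrac12\right)^j\right).$$
   Context: For $n\ge1$ the central factorial is $x^{[n]}=x\,(x+\tfrac n2-1)(x+\tfrac n2-2)\cdots(x-\tfrac n2+1)$ (a product of $n$ factors), and $x^{[0]}=1$. The central factorial numbers of the second kind $T(n,k)$ ($0\le k\le n$) are defined by $x^n=\sum_{k=0}^n T(n,k)\,x^{[k]}$; equivalently $T(n,k)=\frac1{k!}\sum_{j=0}^k(-1)^j\binom kj\left(\frac k2-j\right)^n$, and $T(n,k)=0$ for $k>n$. The $n$th central Fubini-like polynomial is $\mathfrak{C}_n(x)=\sum_{k=0}^n k!\,T(n,k)\,x^k$. *)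

(* Defs.v *)
From HB Require Import structures.
From mathcomp Require Import all_boot all_order all_algebra.
Set Implicit Arguments. Unset Strict Implicit. Unset Printing Implicit Defensive.
Import Order.TTheory GRing.Theory Num.Theory.
Local Open Scope ring_scope.

Definition cfact2 (R : fieldType) (n k : nat) : R :=
  (k`!%:R)^-1 * \sum_(j < k.+1) (-1) ^+ j * 'C(k, j)%:R
                   * (k%:R / 2%:R - j%:R) ^+ n.

Definition central_fubini (R : fieldType) (n : nat) (x : R) : R :=
  \sum_(k < n.+1) k`!%:R * cfact2 R n k * x ^+ k.

Definition Rcoef (R : fieldType) (x : R) (j : nat) : R :=
  x * ((-1) ^+ j.-1 / j`!%:R) * ((2%:R)^-1 ^+ j - (- (2%:R)^-1) ^+ j).

Definition hess_mx (R : fieldType) (x : R) (n : nat) : 'M[R]_n :=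
  \matrix_(i < n, j < n)
    if (j <= i)%N then Rcoef x (i - j).+1
    else if (nat_of_ord j == (nat_of_ord i).+1)%N then 1 else 0.

(* Main.v *)
Require Import Defs.
From HB Require Import structures.
From mathcomp Require Import all_boot all_order all_algebra.
From mathcomp Require Import zify ring lra.
Import Order.TTheory GRing.Theory Num.Theory.
Local Open Scope ring_scope.

Definition uu (R : fieldType) (k n : nat) : R :=
  \sum_(i < k.+1) (-1) ^+ i * 'C(k, i)%:R * (k%:R / 2%:R - i%:R) ^+ n.

Definition ee (R : fieldType) (j : nat) : R :=
  (2%:R)^-1 ^+ j - (- (2%:R)^-1) ^+ j.

Lemma binom_diff (R : fieldType) (a b g : R) n :
  \sum_(j < n.+1) 'C(n, j)%:R * (a ^+ j - b ^+ j) * g ^+ (n - j)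
  = (a + g) ^+ n - (b + g) ^+ n.
rewrite (addrC a) (addrC b) !exprDn -sumrB; apply: eq_bigr => j _.
rewrite -[_ *+ 'C(n, j)]mulr_natr.
ring.
Qed.

Lemma pascal_tel (R : fieldType) (W : nat -> R) k :
  \sum_(i < k.+2) (-1) ^+ i * 'C(k.+1, i)%:R * W i
  = \sum_(i < k.+1) (-1) ^+ i * 'C(k, i)%:R * (W i - W i.+1).
Proof.
rewrite big_ord_recl /=.
under eq_bigr => i _ do rewrite /bump /= add1n binS natrD mulrDr mulrDl.
rewrite big_split /=.
under [in RHS]eq_bigr => i _ do rewrite mulrBr.
rewrite sumrB addrA; congr (_ + _).
  transitivity (\sum_(i < k.+2) (-1) ^+ i * 'C(k, i)%:R * W i).
    by rewrite [RHS]big_ord_recl /= !bin0.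
  by rewrite [LHS]big_ord_recr /= (@bin_small k k.+1) // mulr0 mul0r addr0.
by rewrite -sumrN; apply: eq_bigr => i _; rewrite exprS; ring.
Qed.

Lemma uu_rec (R : fieldType) k n : (2%:R : R) != 0 ->
  uu R k.+1 n = \sum_(j < n.+1) 'C(n, j)%:R * ee R j * uu R k (n - j).
Proof.
move=> h2.
rewrite /uu.
under [in RHS]eq_bigr => j _ do rewrite mulr_sumr.
rewrite exchange_big /= (@pascal_tel R (fun i => (k.+1%:R / 2%:R - i%:R) ^+ n) k); apply: eq_bigr => i _.
rewrite (_ : \sum_(j < n.+1) _ = (-1) ^+ i * 'C(k, i)%:R *
     \sum_(j < n.+1) 'C(n, j)%:R * ee R j * (k%:R / 2%:R - i%:R) ^+ (n - j)); last first.
  by rewrite mulr_sumr; apply: eq_bigr => j _; ring.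
congr (_ * _); rewrite /ee binom_diff.
congr (_ ^+ _ - _ ^+ _).
  by rewrite -[k.+1%:R]natr1; field.
by rewrite -[k.+1%:R]natr1 -[i.+1%:R]natr1; field.
Qed.

Lemma ee0 (R : fieldType) : ee R 0 = 0.
Proof. by rewrite /ee !expr0 subrr. Qed.

Lemma uu_van (R : fieldType) k n : (2%:R : R) != 0 -> (n < k)%N -> uu R k n = 0.
Proof.
move=> h2; elim: k n => [//|k IH] n hn.
rewrite uu_rec //; apply: big1 => j _.
case: (posnP j) => [->|hj]; first by rewrite ee0 mulr0 mul0r.
rewrite IH ?mulr0 //.
have := ltn_ord j; lia.
Qed.

Lemma uu0 (R : fieldType) n : uu R 0 n = (n == 0%N)%:R.
Proof. by rewrite /uu big_ord1 /= expr0 bin0 !mul1r mul0r subr0 expr0n. Qed.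

Lemma uu_ext (R : fieldType) (x : R) N p : (2%:R : R) != 0 -> (p < N)%N ->
  \sum_(k < N) uu R k p * x ^+ k = \sum_(k < p.+1) uu R k p * x ^+ k.
Proof.
move=> h2 /subnKC <-; elim: (N - p.+1)%N => [|t IH]; first by rewrite addn0.
rewrite addnS big_ord_recr /= IH uu_van ?mul0r ?addr0 //.
lia.
Qed.

Definition cc {R : fieldType} (x : R) n :=
  (\sum_(k < n.+1) uu R k n * x ^+ k) / n`!%:R.

Definition aa {R : fieldType} (x : R) j := x * ee R j / j`!%:R.

Lemma fact_neq0 (R : realFieldType) n : (n`!%:R : R) != 0.
Proof. by rewrite pnatr_eq0 -lt0n fact_gt0. Qed.

Lemma cc_rec (R : realFieldType) (x : R) m :
  cc x m.+1 = \sum_(j < m.+1) aa x j.+1 * cc x (m - j) :> R.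
Proof.
have h2 : (2%:R : R) != 0 by rewrite pnatr_eq0.
rewrite /cc big_ord_recl uu0 /= mul0r add0r.
under eq_bigr => k _ do rewrite uu_rec // mulr_suml.
rewrite exchange_big /= big_ord_recl /=.
rewrite big1; last by move=> k _; rewrite ee0 mulr0 mul0r mul0r.
rewrite add0r mulr_suml; apply: eq_bigr => j _.
rewrite /bump /= add1n subSS.
rewrite (_ : \sum_(i < m.+1) _ = 'C(m.+1, j.+1)%:R * ee R j.+1 * x *
   \sum_(k < m.+1) uu R k (m - j) * x ^+ k); last first.
  by rewrite mulr_sumr; apply: eq_bigr => k _; rewrite /bump /= add1n exprS; ring.
rewrite uu_ext //; last by have := ltn_ord j; lia.
set S := \sum_(k < _) _.
have hb := bin_fact (ltn_ord j : (j.+1 <= m.+1)%N).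
rewrite subSS in hb.
have hbR : ('C(m.+1, j.+1)%:R * (j.+1`!%:R * (m - j)`!%:R) = m.+1`!%:R :> R).
  by rewrite -!natrM hb.
rewrite /aa -hbR.
have := fact_neq0 R j.+1; have := fact_neq0 R (m - j).
have : ('C(m.+1, j.+1)%:R : R) != 0 by rewrite pnatr_eq0 -lt0n bin_gt0 (ltn_ord j).
move=> h1 h3 h4; field.
by rewrite h1 h3 h4.
Qed.

Lemma cf_eq (R : realFieldType) n (x : R) : central_fubini n x / n`!%:R = cc x n.
Proof.
rewrite /cc /central_fubini; congr (_ / _); apply: eq_bigr => k _.
by rewrite /cfact2 mulrA mulfV ?fact_neq0 // mul1r.
Qed.

Lemma cc0 (R : realFieldType) (x : R) : cc x 0 = 1.
Proof. by rewrite /cc big_ord1 uu0 expr0 mulr1 divr1. Qed.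

Lemma sum_if (R : fieldType) (f g : nat -> R) i N : (i < N)%N ->
  \sum_(k < N) (if (k <= i)%N then f k else if (k == i.+1 :> nat) then g k else 0)
  = \sum_(k < i.+1) f k + (if (i.+1 < N)%N then g i.+1 else 0).
Proof.
move=> /subnKC <-; elim: (N - i.+1)%N => [|t IH].
  rewrite addn0 ltnn addr0; apply: eq_bigr => k _.
  by rewrite -ltnS ltn_ord.
rewrite addnS big_ord_recr /= IH.
destruct t as [|t].
  by clear IH; rewrite addn0 !ltnn ltnSn eqxx addr0.
have e1 : (i.+1 < i.+1 + t.+1)%N by rewrite -[X in (X < _)%N]addn0 ltn_add2l.
have e2 : (i.+1 < (i.+1 + t.+1).+1)%N by rewrite ltnS leq_addr.
have e3 : (i.+1 + t.+1 <= i)%N = false by apply/negbTE; rewrite -ltnNge ltnW // ltnS leq_addr.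
have e4 : ((i.+1 + t.+1)%N == i.+1) = false by rewrite -[X in _ == X]addn0 eqn_add2l.
by rewrite e1 e2 e3 e4 addr0.
Qed.

Lemma lift_max_val m (i : 'I_m) : (lift ord_max i : nat) = i.
Proof. by rewrite /= /bump leqNgt ltn_ord. Qed.

Lemma lift0_val m (i : 'I_m) : (lift ord0 i : nat) = i.+1.
Proof. by []. Qed.

Lemma rev_sum (R : realFieldType) (x : R) i :
  \sum_(k < i.+1) aa x (i.+1 - k) * cc x k = cc x i.+1.
Proof.
rewrite cc_rec (reindex_inj (@rev_ord_inj i.+1)) /=; apply: eq_bigr => k _.
rewrite subSS (_ : (i.+1 - (i - k) = k.+1)%N) //.
have := ltn_ord k; lia.
Qed.

Theorem theorem10 (R : realFieldType) (n : nat) (x : R) (hn : (0 < n)%N) :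
  central_fubini n x / n`!%:R = \det (hess_mx x n).
Proof.
rewrite cf_eq; case: n hn => [//|m] _.
set H := hess_mx x m.+1.
pose V (k : nat) := (-1) ^+ k * cc x k.
pose U : 'M[R]_m.+1 := \matrix_(i, j) if j == ord0 then V i else (i == j)%:R.
have dU : \det U = 1.
  rewrite det_trig; last first.
    apply/forallP => i; apply/forallP => j; apply/implyP => hij.
    rewrite mxE (_ : j == ord0 = false); last first.
      by apply/negbTE; apply/eqP => hj; move: hij; rewrite hj.
    by rewrite (_ : i == j = false) //; apply/negbTE; rewrite neq_ltn hij.
  rewrite big_ord_recl big1 ?mulr1; last first.
    by move=> i _; rewrite mxE /= eqxx.
  by rewrite mxE eqxx /V expr0 mul1r cc0.
set A := H *m U.
have colA : forall i j, j != ord0 -> A i j = H i j.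
  move=> i j hj; rewrite mxE (bigD1 j) //= big1 ?addr0.
    by rewrite [U _ _]mxE (negbTE hj) eqxx mulr1.
  by move=> k hk; rewrite [U _ _]mxE (negbTE hj) (negbTE hk) mulr0.
have col0 : forall i : 'I_m.+1, A i ord0 = (-1) ^+ i * cc x i.+1 +
     (if (i.+1 < m.+1)%N then V i.+1 else 0).
  move=> i; rewrite mxE.
  rewrite (eq_bigr (fun k : 'I_m.+1 => if (k <= i)%N then Rcoef x (i - k).+1 * V k
          else if (k == i.+1 :> nat) then V k else 0)); last first.
    by move=> k _; rewrite !mxE eqxx; case: ifP => _; [|case: ifP => _]; rewrite ?mul1r ?mul0r.
  rewrite (@sum_if R (fun k => Rcoef x (i - k).+1 * V k) V) // -(@rev_sum R x i) mulr_sumr; congr (_ + _).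
  apply: eq_bigr => k _.
  have hk : (k <= i)%N by rewrite -ltnS ltn_ord.
  rewrite /Rcoef /V /aa /= subSn // /ee.
  rewrite (_ : (-1) ^+ i = (-1) ^+ (i - k) * (-1) ^+ k :> R); last by rewrite -exprD subnK.
  ring.
have -> : \det H = \det A by rewrite det_mulmx dU mulr1.
clearbody A.
rewrite (expand_det_col A ord0) big_ord_recr /= big1 ?add0r; last first.
  move=> i _; rewrite col0 /= ltnS ltn_ord /V exprS mulN1r.
  by rewrite mulNr addrN mul0r.
rewrite col0 /= ltnn addr0 /cofactor /= addn0.
rewrite det_trig; last first.
  apply/forallP => i; apply/forallP => j; apply/implyP => hij.
  rewrite !mxE colA // !mxE lift_max_val lift0_val.
  rewrite (_ : (j.+1 <= i)%N = false); last lia.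
  by rewrite (_ : (j.+1 == i.+1) = false) //; lia.
rewrite big1 ?mulr1; last first.
  by move=> i _; rewrite !mxE colA // !mxE lift_max_val lift0_val ltnn eqxx.
by rewrite mulrC mulrA -exprD -signr_odd oddD addbb expr0 mul1r.
Qed.
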